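(* Let $G=(V,E)$ be a finite simple graph and $v\in V$. Let $G/v$ denote the graph obtained from $G$ by deleting $v$ (and its incident edges) and making the open neighbourhood $N_G(v)$ a clique (adding an edge between any two non-adjacent vertices of $N_G(v)$; already adjacent pairs remain simply adjacent). Then $$\gamma_{coe}(G)-\deg(v)-1\leq \gamma_{coe}(G/v)\leq \gamma_{coe}(G)+\deg(v)-1.$$
   Context: All graphs are finite and simple. For a graph $G=(V,E)$ and $v\in V$, $N_G(v)=\{u\in V: uv\in E\}$ and $\deg(v)=|N_G(v)|$. A set $D\subseteq V$ is a dominating set if every vertex of $V\setminus D$ is adjacent to at least one vertex of $D$. A dominating set $D$ is a co-even dominating set if $\deg(v)$ is even for every $v\in V\setminus D$ (degrees taken in the graph under consideration). The co-even domination number $\gamma_{coe}(G)$ is the minimum cardinality of a co-even dominating set of $G$. *)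

(* Defs.v *)
From mathcomp Require Import all_boot.
Set Implicit Arguments. Unset Strict Implicit. Unset Printing Implicit Defensive.

(* A finite simple graph: vertex type T : finType, adjacency e : rel T,
   assumed symmetric and irreflexive in the theorem. *)

Definition nbhd (T : finType) (e : rel T) (v : T) : {set T} := [set u | e v u].
Definition deg (T : finType) (e : rel T) (v : T) : nat := #|nbhd e v|.

Definition dominating (T : finType) (e : rel T) (D : {set T}) : bool :=
  [forall x, (x \notin D) ==> [exists y in D, e x y]].

Definition coeven_dominating (T : finType) (e : rel T) (D : {set T}) : bool :=
  dominating e D && [forall x, (x \notin D) ==> ~~ odd (deg e x)].

(* minimum cardinality of a co-even dominating set; V itself is one,
   so the minimum is attained and bounded by #|T|. *)
Definition gamma_coe (T : finType) (e : rel T) : nat :=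
  \big[minn/#|T|]_(D : {set T} | coeven_dominating e D) #|D|.

Definition contr_rel (T : finType) (e : rel T) (v : T) : rel {x : T | x != v} :=
  fun x y => e (val x) (val y) || [&& val x != val y, e v (val x) & e v (val y)].
Arguments contr_rel {T} e v.

(* Main.v *)
Require Import Defs.
From mathcomp Require Import all_boot.

Lemma bigmin_le (I : finType) (P : pred I) (F : I -> nat) d j :
  P j -> \big[minn/d]_(i | P i) F i <= F j.
Proof.
move=> Pj; have: j \in index_enum I by rewrite mem_index_enum.
elim: (index_enum I) => [|i r IH] //.
rewrite inE big_cons => /predU1P [<-|/IH H]; first by rewrite Pj geq_minl.
by case: (P i) => //; rewrite geq_min H orbT.
Qed.

Lemma bigmin_ex (I : finType) (P : pred I) (F : I -> nat) d :
  (\big[minn/d]_(i | P i) F i == d) || [exists i, P i && (F i == \big[minn/d]_(i | P i) F i)].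
Proof.
apply: (big_ind (fun m => (m == d) || [exists i, P i && (F i == m)])).
- by rewrite eqxx.
- move=> x y Hx Hy; rewrite /minn; by case: ifP.
- by move=> i Pi; apply/orP; right; apply/existsP; exists i; rewrite Pi eqxx.
Qed.

Lemma coeT (T : finType) (e : rel T) : coeven_dominating e setT.
Proof.
by apply/andP; split; apply/forallP => x; rewrite in_setT.
Qed.

Lemma gamma_le (T : finType) (e : rel T) D :
  coeven_dominating e D -> gamma_coe e <= #|D|.
Proof. exact: bigmin_le. Qed.

Lemma gamma_ex (T : finType) (e : rel T) :
  exists D, coeven_dominating e D && (#|D| == gamma_coe e).
Proof.
have := @bigmin_ex _ (fun D : {set T} => coeven_dominating e D) (fun D => #|D|) #|T|.
case/orP => [/eqP H|/existsP [D HD]].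
  by exists setT; rewrite coeT cardsT /gamma_coe H eqxx.
by exists D.
Qed.

Section S.
Variables (T : finType) (e : rel T) (v : T).
Hypotheses (esym : symmetric e) (eirr : irreflexive e).
Let T' := {x : T | x != v}.

Lemma deg_contr (x : T') : ~~ e v (val x) -> deg (contr_rel e v) x = deg e (val x).
Proof.
move=> Hx; rewrite /deg.
have -> : nbhd e (val x) = val @: nbhd (contr_rel e v) x.
  apply/setP => y; rewrite /nbhd in_set.
  case: (boolP (y == v)) => [/eqP ->|yv].
    rewrite esym (negbTE Hx); symmetry; apply/imsetP => [[z _ zv]].
    by move: (valP z); rewrite -zv eqxx.
  have -> : y = val (exist _ y yv : T') by [].
  rewrite mem_imset ?in_set; last exact: val_inj.
  by rewrite /contr_rel /= (negbTE Hx) /= andbF orbF.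
by rewrite card_imset //; exact: val_inj.
Qed.

Lemma partA : gamma_coe e <= gamma_coe (contr_rel e v) + deg e v + 1.
Proof.
have [D' /andP [HD' /eqP <-]] := @gamma_ex _ (contr_rel e v).
set D := (val @: D') :|: nbhd e v :|: [set v].
have cD : #|D| <= #|D'| + deg e v + 1.
  rewrite /D; apply: leq_trans (leq_card_setU _ _) _; rewrite cards1 leq_add2r.
  apply: leq_trans (leq_card_setU _ _) _; rewrite card_imset //; exact: val_inj.
apply: leq_trans cD; apply: gamma_le.
move: HD' => /andP [/forallP Hdom /forallP Hev].
have key : forall x, x \notin D -> exists2 x' : T', x' \notin D' & (val x' = x /\ ~~ e v x).
  move=> x; rewrite /D !in_setU in_set1 /nbhd in_set !negb_or => /andP [/andP [xD xN] xv].
  exists (exist _ x xv : T'); last by split.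
  by apply: contra xD => H; apply/imsetP; exists (exist _ x xv : T').
apply/andP; split; apply/forallP => x; apply/implyP => /key [x' x'D [<- xN]].
- move: (implyP (Hdom x') x'D) => /existsP [y' /andP [yD cxy]].
  apply/existsP; exists (val y'); rewrite !in_setU mem_imset //=; last exact: val_inj.
  rewrite yD /=; move: cxy; rewrite /contr_rel (negbTE xN) /= andbF orbF; exact.
- by have := implyP (Hev x') x'D; rewrite deg_contr.
Qed.

Lemma partB : gamma_coe (contr_rel e v) + 1 <= gamma_coe e + deg e v.
Proof.
have [D /andP [HD /eqP <-]] := @gamma_ex _ e.
set D' := [set x : T' | (val x \in D) || e v (val x)].
have sub : val @: D' \subset (D :|: nbhd e v) :\ v.
  apply/subsetP => y /imsetP [x]; rewrite in_set => Hx ->.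
  by rewrite !in_setD1 in_setU /nbhd in_set (valP x).
have cD : #|D'| + 1 <= #|D| + deg e v.
  apply: (@leq_trans (#|(D :|: nbhd e v) :\ v| + 1)).
    by rewrite leq_add2r -(card_imset _ val_inj) subset_leq_card.
  rewrite /deg -cardsUI; case: (boolP (v \in D)) => vD.
    rewrite [X in _ <= X + _](cardsD1 v) in_setU vD /= addnC; exact: leq_addr.
  move: HD => /andP [/forallP Hdom _].
  have /existsP [y /andP [yD vy]] := implyP (Hdom v) vD.
  apply: leq_add.
    by apply: subset_leq_card; apply/subsetP => z; rewrite in_setD1 => /andP [].
  by rewrite card_gt0; apply/set0Pn; exists y; rewrite in_setI yD /nbhd in_set.
apply: leq_trans cD; rewrite leq_add2r; apply: gamma_le.
move: HD => /andP [/forallP Hdom /forallP Hev].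
apply/andP; split; apply/forallP => x; apply/implyP;
  rewrite /D' in_set negb_or => /andP [xD xN].
- have /existsP [y /andP [yD xy]] := implyP (Hdom (val x)) xD.
  have yv : y != v by apply/eqP => yv; move: xy; rewrite yv esym (negbTE xN).
  apply/existsP; exists (exist _ y yv); rewrite in_set /= yD /=.
  by rewrite /contr_rel /= xy.
- by rewrite deg_contr //; exact: (implyP (Hev (val x)) xD).
Qed.
End S.

Theorem mainTheorem4 (T : finType) (e : rel T) (v : T)
  (esym : symmetric e) (eirr : irreflexive e) :
  gamma_coe e <= gamma_coe (contr_rel e v) + deg e v + 1 /\
  gamma_coe (contr_rel e v) + 1 <= gamma_coe e + deg e v.
Proof. split; [exact: partA | exact: partB]. Qed.
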